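(* There exists a Sudoku board $B$ such that the only element $g\in G_9$ with $g\cdot B=B$ is the identity. Consequently the largest orbit of $G_9$ on Sudoku boards has size $|G_9|=1{,}218{,}998{,}108{,}160$.
   Context: A Sudoku board is a $9\times 9$ array with entries from a fixed set of nine symbols such that every row, every column and every one of the nine $3\times 3$ blocks contains each symbol exactly once. The full Sudoku symmetry group is $G_9=H_9\times S_9$, where $H_9$ (order $3{,}359{,}232$) is the group of cell rearrangements generated by permutations of the three bands (horizontal strips of blocks), permutations of the rows within a band, permutations of the three pillars (vertical strips of blocks), permutations of the columns within a pillar, and the transpose, and $S_9$ is the group of all $9!$ relabelings (permutations of the symbols applied to every entry). *)

(* Defs.v *)
From mathcomp Require Import all_boot all_fingroup.
Set Implicit Arguments. Unset Strict Implicit. Unset Printing Implicit Defensive.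

(* A row index is (band, row within band); a column index is (pillar, column
   within pillar).  Row (b,i) is row 3b+i of the grid. *)
Definition idx := ('I_3 * 'I_3)%type.
Definition cell := (idx * idx)%type.   (* (row, column) *)
Definition board := {ffun cell -> 'I_9}.

Definition is_sudoku (B : board) : bool :=
  [&& [forall r : idx, forall k : 'I_9, #|[set c : idx | B (r, c) == k]| == 1],
      [forall c : idx, forall k : 'I_9, #|[set r : idx | B (r, c) == k]| == 1] &
      [forall bp : 'I_3 * 'I_3, forall k : 'I_9,
         #|[set x : cell | [&& (x.1.1 == bp.1), (x.2.1 == bp.2) & (B x == k)]]| == 1]].

Definition band_map (s : {perm 'I_3}) (x : cell) : cell :=
  ((s x.1.1, x.1.2), x.2).
Definition row_map (b : 'I_3) (s : {perm 'I_3}) (x : cell) : cell :=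
  if x.1.1 == b then ((x.1.1, s x.1.2), x.2) else x.
Definition pillar_map (s : {perm 'I_3}) (x : cell) : cell :=
  (x.1, (s x.2.1, x.2.2)).
Definition col_map (p : 'I_3) (s : {perm 'I_3}) (x : cell) : cell :=
  if x.2.1 == p then (x.1, (x.2.1, s x.2.2)) else x.
Definition transpose_map (x : cell) : cell := (x.2, x.1).

Definition H9_gens : {set {perm cell}} :=
  [set g : {perm cell} |
     [|| [exists s : {perm 'I_3}, [forall x, g x == band_map s x]],
         [exists b : 'I_3, exists s : {perm 'I_3}, [forall x, g x == row_map b s x]],
         [exists s : {perm 'I_3}, [forall x, g x == pillar_map s x]],
         [exists p : 'I_3, exists s : {perm 'I_3}, [forall x, g x == col_map p s x]]
       | [forall x, g x == transpose_map x]]].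

Definition H9 : {group {perm cell}} := <<H9_gens>>%G.

(* G_9 = H_9 x S_9, as a set of pairs (cell rearrangement, relabeling). *)
Definition G9 : {set {perm cell} * {perm 'I_9}} :=
  setX H9 [set: {perm 'I_9}].

(* Action: (h, s) . B  moves the entry at cell x to cell h x and relabels it by s. *)
Definition act9 (g : {perm cell} * {perm 'I_9}) (B : board) : board :=
  [ffun x => g.2 (B ((g.1^-1)%g x))].

Definition orbit9 (B : board) : {set board} := [set act9 g B | g in G9].

(* |G_9| = |H_9| * 9! = (2 * (3!)^8) * 9! = 3359232 * 362880 = 1218998108160,
   written as an expression to avoid a huge unary nat literal. *)
Definition G9_order : nat := 2 * (3`!) ^ 8 * 9`!.

(* Main.v *)
Require Import Defs.
From mathcomp Require Import all_boot all_fingroup.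
From mathcomp Require Import zify.
Set Implicit Arguments. Unset Strict Implicit. Unset Printing Implicit Defensive.


Definition L := ({perm 'I_3} * {ffun 'I_3 -> {perm 'I_3}})%type.
Definition app (l : L) (x : idx) : idx := (l.1 x.1, l.2 x.1 x.2).
Arguments app : simpl never.
Lemma app_inj l : injective (app l).
Proof. rewrite /app; move=> [a b] [c d] [] /= /perm_inj Eac; subst c => /perm_inj ->. by []. Qed.

Definition par := (bool * L * L)%type.
Definition Ff (q : par) (x : cell) : cell :=
  if q.1.1 then (app q.2 x.2, app q.1.2 x.1) else (app q.1.2 x.1, app q.2 x.2).
Lemma Ff_inj q : injective (Ff q).
Proof.
rewrite /Ff; case: q.1.1 => -[x1 x2] [y1 y2] /= E; have /= H1 := congr1 fst E;
  have /= H2 := congr1 snd E; by rewrite (app_inj H1) (app_inj H2).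
Qed.
Definition Pm q := perm (@Ff_inj q).
Definition Sset := Pm @: [set: par].

Lemma band_inj s : injective (band_map s).
Proof. apply: (can_inj (g := band_map s^-1)) => -[[b i] c]; by rewrite /band_map /= permK. Qed.
Lemma pillar_inj s : injective (pillar_map s).
Proof. apply: (can_inj (g := pillar_map s^-1)) => -[r [b i]]; by rewrite /pillar_map /= permK. Qed.
Lemma row_inj b s : injective (row_map b s).
Proof.
apply: (can_inj (g := row_map b s^-1)) => -[[b' i] c]; rewrite /row_map /=.
by case: (eqVneq b' b) => [->|Hne]; rewrite /= ?eqxx ?permK // (negbTE Hne).
Qed.
Lemma col_inj b s : injective (col_map b s).
Proof.
apply: (can_inj (g := col_map b s^-1)) => -[r [b' i]]; rewrite /col_map /=.
by case: (eqVneq b' b) => [->|Hne]; rewrite /= ?eqxx ?permK // (negbTE Hne).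
Qed.
Lemma tr_inj : injective transpose_map.
Proof. by apply: (can_inj (g := transpose_map)) => -[]. Qed.

Definition Pband s := perm (@band_inj s).
Definition Ppillar s := perm (@pillar_inj s).
Definition Prow b s := perm (@row_inj b s).
Definition Pcol b s := perm (@col_inj b s).
Definition Ptr := perm tr_inj.

Lemma Pband_in s : Pband s \in H9.
Proof. apply: mem_gen; rewrite inE; apply/orP; left; apply/existsP; exists s; apply/forallP => x; by rewrite permE. Qed.
Lemma Prow_in b s : Prow b s \in H9.
Proof. apply: mem_gen; rewrite inE; apply/orP; right; apply/orP; left; apply/existsP; exists b; apply/existsP; exists s; apply/forallP => x; by rewrite permE. Qed.
Lemma Ppillar_in s : Ppillar s \in H9.
Proof. apply: mem_gen; rewrite inE; do 2 (apply/orP; right); apply/orP; left; apply/existsP; exists s; apply/forallP => x; by rewrite permE. Qed.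
Lemma Pcol_in b s : Pcol b s \in H9.
Proof. apply: mem_gen; rewrite inE; do 3 (apply/orP; right); apply/orP; left; apply/existsP; exists b; apply/existsP; exists s; apply/forallP => x; by rewrite permE. Qed.
Lemma Ptr_in : Ptr \in H9.
Proof. apply: mem_gen; rewrite inE; do 4 (apply/orP; right); apply/forallP => x; by rewrite permE. Qed.

Definition o0 : 'I_3 := @Ordinal 3 0 isT.
Definition o1 : 'I_3 := @Ordinal 3 1 isT.
Definition o2 : 'I_3 := @Ordinal 3 2 isT.
Lemma ord3_cases (b : 'I_3) : [\/ b = o0, b = o1 | b = o2].
Proof. case: b => -[|[|[|//]]] H; [apply: Or31|apply: Or32|apply: Or33]; exact: val_inj. Qed.

Definition RowPerm (l : L) : {perm cell} := (Prow o0 (l.2 o0) * Prow o1 (l.2 o1) * Prow o2 (l.2 o2) * Pband l.1)%g.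
Definition ColPerm (l : L) : {perm cell} := (Pcol o0 (l.2 o0) * Pcol o1 (l.2 o1) * Pcol o2 (l.2 o2) * Ppillar l.1)%g.
Lemma RowPermE l x : RowPerm l x = (app l x.1, x.2).
Proof.
rewrite !permM !permE; case: x => -[b i] c.
by case: (ord3_cases b) => ->; rewrite /row_map /band_map /app /=.
Qed.
Lemma ColPermE l x : ColPerm l x = (x.1, app l x.2).
Proof.
rewrite !permM !permE; case: x => r [b i].
by case: (ord3_cases b) => ->; rewrite /col_map /pillar_map /app /=.
Qed.
Lemma RowPerm_in l : RowPerm l \in H9.
Proof. by rewrite !groupM ?Prow_in ?Pband_in. Qed.
Lemma ColPerm_in l : ColPerm l \in H9.
Proof. by rewrite !groupM ?Pcol_in ?Ppillar_in. Qed.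

Lemma Pm_in q : Pm q \in H9.
Proof.
have -> : Pm q = (RowPerm q.1.2 * ColPerm q.2 * (if q.1.1 then Ptr else 1))%g.
  apply/permP => x; rewrite [LHS]permE permM permM RowPermE ColPermE /Ff.
  by case: q.1.1; rewrite ?permE ?perm1.
apply: groupM; [apply: groupM; [exact: RowPerm_in|exact: ColPerm_in] | case: q.1.1; [exact: Ptr_in|exact: group1]].
Qed.


Definition postband (s : {perm 'I_3}) (l : L) : L := ((l.1 * s)%g, l.2).
Definition postrow (b : 'I_3) (s : {perm 'I_3}) (l : L) : L :=
  (l.1, [ffun y => if l.1 y == b then (l.2 y * s)%g else l.2 y]).
Lemma pb_app (s : {perm 'I_3}) (l : L) (y : idx) : ((s (app l y).1, (app l y).2) : idx) = app (postband s l) y.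
Proof. by rewrite /app /postband /= permM. Qed.
Lemma pr_app (b : 'I_3) (s : {perm 'I_3}) (l : L) (y : idx) : (if (app l y).1 == b then ((app l y).1, s (app l y).2) else app l y)
   = app (postrow b s l) y.
Proof. rewrite /app /postrow /= ffunE; by case: eqP; rewrite ?permM. Qed.

Lemma Pm_mul (q : par) (a : {perm cell}) (q' : par) : (forall x, a (Ff q x) = Ff q' x) -> (Pm q * a)%g \in Sset.
Proof.
move=> H; have -> : (Pm q * a)%g = Pm q' by apply/permP => x; rewrite permM !permE.
by apply: imset_f; rewrite inE.
Qed.

Lemma gens_N : H9_gens \subset ('N(Sset | 'R))%g.
Proof.
apply/subsetP => a Ha; rewrite !inE; apply/subsetP => g Hg; rewrite inE /=.
case/imsetP: Hg => -[[t R] C] _ ->.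
rewrite inE in Ha.
case/orP: Ha => [/existsP[s /forallP Hs]|].
  apply: (Pm_mul (q' := if t then ((t, R), postband s C) else ((t, postband s R), C))) => x.
  by rewrite (eqP (Hs _)) /band_map /Ff; case: t => /=; rewrite pb_app.
case/orP => [/existsP[b /existsP[s /forallP Hs]]|].
  apply: (Pm_mul (q' := if t then ((t, R), postrow b s C) else ((t, postrow b s R), C))) => x.
  by rewrite (eqP (Hs _)) /row_map /Ff; case: t => /=; rewrite -pr_app; case: ifP.
case/orP => [/existsP[s /forallP Hs]|].
  apply: (Pm_mul (q' := if t then ((t, postband s R), C) else ((t, R), postband s C))) => x.
  by rewrite (eqP (Hs _)) /pillar_map /Ff; case: t => /=; rewrite pb_app.
case/orP => [/existsP[b /existsP[s /forallP Hs]]|/forallP Hs].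
  apply: (Pm_mul (q' := if t then ((t, postrow b s R), C) else ((t, R), postrow b s C))) => x.
  by rewrite (eqP (Hs _)) /col_map /Ff; case: t => /=; rewrite -pr_app; case: ifP.
apply: (Pm_mul (q' := ((~~ t, R), C))) => x.
by rewrite (eqP (Hs _)) /transpose_map /Ff; case: t.
Qed.

Definition qid : par := ((false, (1%g, [ffun => 1%g])), (1%g, [ffun => 1%g])).
Lemma Pm_id : Pm qid = 1%g.
Proof. apply/permP => -[[b i] [p j]]; rewrite !permE /Ff /app /= !ffunE !perm1. by []. Qed.

Lemma H9_S : H9 :=: Sset.
Proof.
apply/eqP; rewrite eqEsubset; apply/andP; split; last first.
  by apply/subsetP => g /imsetP[q _ ->]; exact: Pm_in.
have HN : H9 \subset ('N(Sset | 'R))%g by rewrite gen_subG gens_N.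
apply/subsetP => h Hh.
have := astabs_act 1%g (subsetP HN h Hh); rewrite /= mul1g => ->.
by rewrite -Pm_id; apply: imset_f; rewrite inE.
Qed.


Lemma app_eq (l1 l2 : L) : (forall y, app l1 y = app l2 y) -> l1 = l2.
Proof.
case: l1 l2 => [s1 f1] [s2 f2] H.
have Hs : s1 = s2 by apply/permP => b; move: (congr1 fst (H (b, o0))); rewrite /app /= => ->.
have Hf : f1 = f2.
  apply/ffunP => b; apply/permP => i; by move: (congr1 snd (H (b, i))); rewrite /app /= => ->.
by rewrite Hs Hf.
Qed.

Lemma Pm_inj : injective Pm.
Proof.
move=> [[t1 R1] C1] [[t2 R2] C2] E.
have H x : Ff ((t1, R1), C1) x = Ff ((t2, R2), C2) x by move: (congr1 (fun p : {perm cell} => p x) E); rewrite /= /Pm !permE.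
pose x0 : cell := ((o0, o0), (o0, o0)); pose x1 : cell := ((o0, o0), (o1, o0)).
clear E; case: t1 H => H; case: t2 H => H.
- have HR y : app R1 y = app R2 y := congr1 snd (H (y, (o0, o0))).
  have HC y : app C1 y = app C2 y := congr1 fst (H ((o0, o0), y)).
  by rewrite (app_eq HR) (app_eq HC).
- exfalso; have E1 := congr1 fst (H x0); have E2 := congr1 fst (H x1).
  rewrite /Ff /= in E1 E2.
  by move: (app_inj (etrans E1 (esym E2))) => /(congr1 (fun z : idx => val z.1)).
- exfalso; have E1 := congr1 fst (H x0); have E2 := congr1 fst (H x1).
  rewrite /Ff /= in E1 E2.
  by move: (app_inj (etrans (esym E1) E2)) => /(congr1 (fun z : idx => val z.1)).
- have HR y : app R1 y = app R2 y := congr1 fst (H (y, (o0, o0))).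
  have HC y : app C1 y = app C2 y := congr1 snd (H ((o0, o0), y)).
  by rewrite (app_eq HR) (app_eq HC).
Qed.

Lemma card_permT (T : finType) : #|{: {perm T}}| = #|T|`!.
Proof.
rewrite (eq_card (B := perm_on [set: T])).
  by rewrite card_perm cardsT.
move=> p; rewrite inE unfold_in /perm_on /=.
by apply/esym/subsetP => i _; rewrite in_set.
Qed.

Lemma card_S : #|Sset| = 2 * 3`! ^ 8.
Proof.
rewrite /Sset card_imset; last exact: Pm_inj.
rewrite cardsT !card_prod card_bool card_ffun !card_permT !card_ord.
move: (3`!) => a.
by rewrite -expnS -mulnA -expnD.
Qed.

Lemma card_G9 : #|G9| = G9_order.
Proof. rewrite /G9 cardsX H9_S card_S cardsT card_permT card_ord. reflexivity. Qed.


Definition Tb : seq (seq nat) := [:: [:: 0; 1; 2; 3; 4; 5; 6; 7; 8]; [:: 3; 8; 4; 2; 6; 7; 5; 0; 1]; [:: 6; 5; 7; 8; 1; 0; 4; 3; 2]; [:: 8; 7; 0; 6; 5; 3; 1; 2; 4]; [:: 5; 6; 1; 4; 0; 2; 7; 8; 3]; [:: 4; 2; 3; 7; 8; 1; 0; 6; 5]; [:: 2; 4; 6; 1; 7; 8; 3; 5; 0]; [:: 1; 0; 8; 5; 3; 6; 2; 4; 7]; [:: 7; 3; 5; 0; 2; 4; 8; 1; 6]].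
Definition tbl r c := nth 0 (nth [::] Tb r) c.
Definition I9 := iota 0 9.
Definition I3 := iota 0 3.

Lemma allI n (P : pred nat) : all P (iota 0 n) -> forall i, i < n -> P i.
Proof. by move=> /allP H i Hi; apply: H; rewrite mem_iota. Qed.

Definition c_lt := all (fun r => all (fun c => tbl r c < 9) I9) I9.
Definition c_row0 := all (fun c => tbl 0 c == c) I9.
Definition c_coluniq := all (fun c => all (fun r1 => all (fun r2 => (tbl r1 c == tbl r2 c) ==> (r1 == r2)) I9) I9) I9.
Definition c_rowuniq := all (fun r => all (fun c1 => all (fun c2 => (tbl r c1 == tbl r c2) ==> (c1 == c2)) I9) I9) I9.
Definition c_rowhas := all (fun r => all (fun k => has (fun c => tbl r c == k) I9) I9) I9.
Definition c_colhas := all (fun c => all (fun k => has (fun r => tbl r c == k) I9) I9) I9.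
Definition c_blkhas := all (fun b => all (fun p => all (fun k =>
   has (fun i => has (fun j => tbl (3 * b + i) (3 * p + j) == k) I3) I3) I9) I3) I3.
Definition c_blkuniq := all (fun b => all (fun p => all (fun i1 => all (fun j1 => all (fun i2 => all (fun j2 =>
   (tbl (3 * b + i1) (3 * p + j1) == tbl (3 * b + i2) (3 * p + j2)) ==> ((i1 == i2) && (j1 == j2))) I3) I3) I3) I3) I3) I3.

Lemma c_lt_ok : c_lt. Proof. by vm_compute. Qed.
Lemma c_row0_ok : c_row0. Proof. by vm_compute. Qed.
Lemma c_coluniq_ok : c_coluniq. Proof. by vm_compute. Qed.
Lemma c_rowuniq_ok : c_rowuniq. Proof. by vm_compute. Qed.
Lemma c_rowhas_ok : c_rowhas. Proof. by vm_compute. Qed.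
Lemma c_colhas_ok : c_colhas. Proof. by vm_compute. Qed.
Lemma c_blkhas_ok : c_blkhas. Proof. by vm_compute. Qed.
Lemma c_blkuniq_ok : c_blkuniq. Proof. by vm_compute. Qed.

Lemma tbl_lt r c : r < 9 -> c < 9 -> tbl r c < 9.
Proof. by move=> Hr Hc; have := allI c_lt_ok Hr => /allI; apply. Qed.
Lemma tbl_row0 c : c < 9 -> tbl 0 c = c.
Proof. by move=> Hc; apply/eqP; exact: (allI c_row0_ok Hc). Qed.
Lemma col_uniq c r1 r2 : c < 9 -> r1 < 9 -> r2 < 9 -> tbl r1 c = tbl r2 c -> r1 = r2.
Proof.
move=> Hc H1 H2 E; have := allI (allI (allI c_coluniq_ok Hc) H1) H2.
by rewrite E eqxx => /eqP.
Qed.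
Lemma row_uniq r c1 c2 : r < 9 -> c1 < 9 -> c2 < 9 -> tbl r c1 = tbl r c2 -> c1 = c2.
Proof.
move=> Hr H1 H2 E; have := allI (allI (allI c_rowuniq_ok Hr) H1) H2.
by rewrite E eqxx => /eqP.
Qed.
Lemma blk_uniq b p i1 j1 i2 j2 : b < 3 -> p < 3 -> i1 < 3 -> j1 < 3 -> i2 < 3 -> j2 < 3 ->
  tbl (3 * b + i1) (3 * p + j1) = tbl (3 * b + i2) (3 * p + j2) -> i1 = i2 /\ j1 = j2.
Proof.
move=> Hb Hp H1 H2 H3 H4 E.
have := allI (allI (allI (allI (allI (allI c_blkuniq_ok Hb) Hp) H1) H2) H3) H4.
by rewrite E eqxx /= => /andP[/eqP -> /eqP ->].
Qed.

Definition findr c v := find (fun r => tbl r c == v) I9.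
Definition findc r v := find (fun c => tbl r c == v) I9.

Lemma find9 (P : pred nat) r : r < 9 -> P r -> (forall r', r' < 9 -> P r' -> r' = r) ->
  find P I9 = r.
Proof.
move=> Hr Pr Hu.
have Hhas : has P I9 by apply/hasP; exists r => //; rewrite mem_iota.
have Hi : find P I9 < 9 by move: Hhas; rewrite has_find size_iota.
apply: Hu => //; move: (nth_find 0 Hhas); rewrite nth_iota //.
Qed.

Lemma findr_eq c r : c < 9 -> r < 9 -> findr c (tbl r c) = r.
Proof. move=> Hc Hr; apply: find9 => // r' Hr' /eqP; exact: col_uniq. Qed.
Lemma findc_eq r c : r < 9 -> c < 9 -> findc r (tbl r c) = c.
Proof. move=> Hr Hc; apply: find9 => // c' Hc' /eqP; exact: row_uniq. Qed.


Definition enc (x : idx) : nat := 3 * x.1 + x.2.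
Definition dec (k : nat) : idx := (inord (k %/ 3), inord (k %% 3)).
Definition Bt : board := [ffun x : cell => inord (tbl (enc x.1) (enc x.2))].

Lemma enc_lt x : enc x < 9.
Proof. case: x => a b; rewrite /enc /=; have := ltn_ord a; have := ltn_ord b; lia. Qed.
Lemma dec_enc x : dec (enc x) = x.
Proof.
case: x => a b; have Ha := ltn_ord a; have Hb := ltn_ord b.
rewrite /dec /enc /=; congr pair; apply: val_inj; rewrite /= inordK; lia.
Qed.
Lemma enc_dec k : k < 9 -> enc (dec k) = k.
Proof. move=> Hk; rewrite /enc /dec /= !inordK; lia. Qed.
Lemma enc_inj : injective enc.
Proof. by move=> x y E; rewrite -(dec_enc x) E dec_enc. Qed.

Lemma Bt_val x : val (Bt x) = tbl (enc x.1) (enc x.2).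
Proof. by rewrite ffunE; apply: inordK; rewrite tbl_lt ?enc_lt. Qed.

Lemma memI n i : i \in iota 0 n -> i < n.
Proof. by rewrite mem_iota. Qed.

Lemma card_set1 (U : finType) (p : pred U) x0 : p x0 -> (forall y, p y -> y = x0) ->
  #|[set y | p y]| == 1.
Proof.
move=> Hx Hu; rewrite (_ : [set y | p y] = [set x0]) ?cards1 //.
apply/setP => y; rewrite !inE; apply/idP/eqP => [/Hu|->] //.
Qed.

Lemma sudoku_Bt : is_sudoku Bt.
Proof.
apply/and3P; split.
- apply/forallP => r; apply/forallP => k.
  have Hr := enc_lt r; have Hk := ltn_ord k.
  case/hasP: (allI (allI c_rowhas_ok Hr) Hk) => c /memI Hc /eqP Ec.
  apply: (@card_set1 _ _ (dec c)).
    by apply/eqP/val_inj; rewrite Bt_val /= enc_dec.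
  move=> c' /eqP /(congr1 val); rewrite Bt_val /= -Ec => E.
  by rewrite -(row_uniq Hr (enc_lt c') Hc E) dec_enc.
- apply/forallP => c; apply/forallP => k.
  have Hc := enc_lt c; have Hk := ltn_ord k.
  case/hasP: (allI (allI c_colhas_ok Hc) Hk) => r /memI Hr /eqP Er.
  apply: (@card_set1 _ _ (dec r)).
    by apply/eqP/val_inj; rewrite Bt_val /= enc_dec.
  move=> r' /eqP /(congr1 val); rewrite Bt_val /= -Er => E.
  by rewrite -(col_uniq Hc (enc_lt r') Hr E) dec_enc.
- apply/forallP => -[b p]; apply/forallP => k.
  have Hb := ltn_ord b; have Hp := ltn_ord p; have Hk := ltn_ord k.
  case/hasP: (allI (allI (allI c_blkhas_ok Hb) Hp) Hk) => i /memI Hi.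
  case/hasP => j /memI Hj /eqP Eij.
  apply: (@card_set1 _ _ ((b, inord i), (p, inord j))).
    rewrite /= !eqxx /=; apply/eqP/val_inj; rewrite Bt_val /enc /= !inordK //.
  move=> [[b' i'] [p' j']] /= /and3P[/eqP Eb /eqP Ep /eqP /(congr1 val)].
  subst b' p'; rewrite Bt_val /enc /= -Eij => E.
  have [Ei Ej] := blk_uniq Hb Hp (ltn_ord i') (ltn_ord j') Hi Hj E.
  by congr (_, _); congr (_, _); apply: val_inj; rewrite /= inordK.
Qed.


Definition P3 : seq (seq nat) := [:: [::0;1;2]; [::0;2;1]; [::1;0;2]; [::1;2;0]; [::2;0;1]; [::2;1;0]].
Definition mkf (s f0 f1 f2 : seq nat) (k : nat) : nat :=
  3 * nth 0 s (k %/ 3) + nth 0 (nth [::] [:: f0; f1; f2] (k %/ 3)) (k %% 3).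
Definition chk1 (cf : nat -> nat) r0 :=
  all (fun r => all (fun c => tbl (findr (cf 0) (tbl r0 (cf (tbl r 0)))) (cf c) == tbl r0 (cf (tbl r c))) I9) I9
  ==> (all (fun c => cf c == c) I9 && all (fun r => findr (cf 0) (tbl r0 (cf (tbl r 0))) == r) I9).
Definition chk2 (cf : nat -> nat) c0 :=
  ~~ all (fun r => all (fun c => tbl (cf c) (findc (cf 0) (tbl (cf (tbl r 0)) c0)) == tbl (cf (tbl r c)) c0) I9) I9.
Definition bigcheck := all (fun s => all (fun f0 => all (fun f1 => all (fun f2 =>
  all (fun r0 => chk1 (mkf s f0 f1 f2) r0 && chk2 (mkf s f0 f1 f2) r0) I9) P3) P3) P3) P3.
Lemma bigcheck_ok : bigcheck. Proof. by vm_compute. Qed.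

Definition c_P3 := all (fun a => all (fun b => all (fun c =>
  [&& a != b, a != c & b != c] ==> ([:: a; b; c] \in P3)) I3) I3) I3.
Lemma c_P3_ok : c_P3. Proof. by vm_compute. Qed.

Definition pl (s : {perm 'I_3}) : seq nat := [:: val (s o0); val (s o1); val (s o2)].
Lemma pl_in s : pl s \in P3.
Proof.
have H := allI (allI (allI c_P3_ok (ltn_ord (s o0))) (ltn_ord (s o1))) (ltn_ord (s o2)).
rewrite /pl; apply: (implyP H).
by rewrite !(inj_eq val_inj) !(inj_eq perm_inj).
Qed.
Lemma inord_o (i : 'I_3) : inord (val i) = i.
Proof. exact: inord_val. Qed.
Lemma nth_pl s i : i < 3 -> nth 0 (pl s) i = val (s (inord i)).
Proof.
case: i => [|[|[|i]]] Hi //=; congr (val (s _)); apply/val_inj; by rewrite /= inordK.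
Qed.

Definition lnat (l : L) (k : nat) : nat := enc (app l (dec k)).

Lemma rep (l : L) : exists s f0 f1 f2, [/\ s \in P3, f0 \in P3, f1 \in P3, f2 \in P3 &
  forall k, k < 9 -> lnat l k = mkf s f0 f1 f2 k].
Proof.
exists (pl l.1), (pl (l.2 o0)), (pl (l.2 o1)), (pl (l.2 o2)); split; rewrite ?pl_in //.
move=> k Hk; have H1 : k %/ 3 < 3 by lia.
have H2 : k %% 3 < 3 by lia.
rewrite /lnat /mkf /enc /app /dec /= nth_pl //.
congr (_ + _).
move: H1; case: (k %/ 3) => [|[|[|]]] // _; rewrite /= nth_pl //; congr (val (l.2 _ _));
  apply/val_inj; by rewrite /= inordK.
Qed.


Lemma lnat_enc (l : L) x : lnat l (enc x) = enc (app l x).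
Proof. by rewrite /lnat dec_enc. Qed.

Lemma stab g : g \in G9 -> act9 g Bt = Bt -> g = (1%g, 1%g).
Proof.
case: g => h s; rewrite inE /= => /andP[Hh _] E.
rewrite H9_S in Hh; case/imsetP: Hh => q _ Eh; subst h.
have HF y : s (Bt y) = Bt (Ff q y).
  have := congr1 (fun B : board => B (Pm q y)) E; rewrite /act9 ffunE /= permK => ->.
  by rewrite permE.
pose sg v := val (s (inord v)).
have Hsg r c : r < 9 -> c < 9 -> sg (tbl r c) = val (Bt (Ff q (dec r, dec c))).
  move=> Hr Hc; rewrite /sg -HF; congr (val (s _)); apply/val_inj.
  by rewrite Bt_val /= !enc_dec // inordK // tbl_lt.
clear E; case: q HF Hsg => -[t R] C HF Hsg.
have [s0 [f0 [f1 [f2 [Hs0 Hf0 Hf1 Hf2 Hcf]]]]] := rep C.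
set cf := mkf s0 f0 f1 f2 in Hcf.
have Hchk r0 : r0 < 9 -> chk1 cf r0 && chk2 cf r0.
  move=> Hr0; have H := bigcheck_ok; rewrite /bigcheck in H.
  by have /allI := allP (allP (allP (allP H s0 Hs0) f0 Hf0) f1 Hf1) f2 Hf2; apply.
have Hcf0 : cf 0 < 9 by rewrite -Hcf // enc_lt.
case: t HF Hsg => HF Hsg.
- (* transposed case: impossible *)
  have H1 r c : r < 9 -> c < 9 -> sg (tbl r c) = tbl (cf c) (lnat R r).
    by move=> Hr Hc; rewrite Hsg // Bt_val /Ff /= -Hcf.
  pose c0 := lnat R 0.
  have Hsv v : v < 9 -> sg v = tbl (cf v) c0.
    by move=> Hv; rewrite -{1}(tbl_row0 Hv) H1.
  have HR r : r < 9 -> findc (cf 0) (tbl (cf (tbl r 0)) c0) = lnat R r.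
    by move=> Hr; rewrite -Hsv ?tbl_lt // H1 // findc_eq // enc_lt.
  have Hprem : all (fun r => all (fun c => tbl (cf c) (findc (cf 0) (tbl (cf (tbl r 0)) c0)) == tbl (cf (tbl r c)) c0) I9) I9.
    apply/allP => r /memI Hr; apply/allP => c /memI Hc.
    by rewrite HR // -Hsv ?tbl_lt // H1.
  have := Hchk c0 (enc_lt _); rewrite /chk2 Hprem /=.
  by rewrite andbF.
- have H1 r c : r < 9 -> c < 9 -> sg (tbl r c) = tbl (lnat R r) (cf c).
    by move=> Hr Hc; rewrite Hsg // Bt_val /Ff /= -Hcf.
  pose r0 := lnat R 0.
  have Hsv v : v < 9 -> sg v = tbl r0 (cf v).
    by move=> Hv; rewrite -{1}(tbl_row0 Hv) H1.
  have HR r : r < 9 -> findr (cf 0) (tbl r0 (cf (tbl r 0))) = lnat R r.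
    by move=> Hr; rewrite -Hsv ?tbl_lt // H1 // findr_eq // enc_lt.
  have Hprem : all (fun r => all (fun c => tbl (findr (cf 0) (tbl r0 (cf (tbl r 0)))) (cf c) == tbl r0 (cf (tbl r c))) I9) I9.
    apply/allP => r /memI Hr; apply/allP => c /memI Hc.
    by rewrite HR // -Hsv ?tbl_lt // H1.
  have /andP[Hch _] := Hchk r0 (enc_lt _).
  move: Hch; rewrite /chk1 Hprem implyTb => /andP[HC HRid].

  have HCk k : k < 9 -> lnat C k = k by move=> Hk; rewrite Hcf //; apply/eqP; exact: (allI HC Hk).
  have HRk k : k < 9 -> lnat R k = k by move=> Hk; rewrite -HR //; apply/eqP; exact: (allI HRid Hk).
  have AR x : app R x = x by apply: enc_inj; rewrite -lnat_enc HRk ?enc_lt.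
  have AC x : app C x = x by apply: enc_inj; rewrite -lnat_enc HCk ?enc_lt.
  congr pair.
    by apply/permP => x; rewrite permE perm1 /Ff /= AR AC; case: x.
  apply/permP => v; rewrite perm1; apply/val_inj.
  have := Hsv (val v) (ltn_ord v); rewrite /sg inord_val => ->.
  rewrite -(Hcf _ (ltn_ord v)) (HCk _ (ltn_ord v)) /r0 (HRk 0 isT) tbl_row0 //.
Qed.


Theorem mainTheorem10 :
  (exists B : board, is_sudoku B /\
     (forall g, g \in G9 -> act9 g B = B -> g = (1%g, 1%g)))
  /\ #|G9| = G9_order
  /\ (exists B : board, is_sudoku B /\ #|orbit9 B| = G9_order)
  /\ (forall B : board, is_sudoku B -> #|orbit9 B| <= G9_order).
Proof.
have Hinj : {in G9 &, injective (fun g => act9 g Bt)}.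
  move=> [h1 s1] [h2 s2]; rewrite !inE /= !andbT => H1 H2 E.
  pose g := ((h1 * h2^-1)%g, (s1 * s2^-1)%g).
  have Hg : g \in G9.
    rewrite inE /=; apply/andP; split; last by rewrite inE.
    by rewrite groupM ?groupV.
  have Hact : act9 g Bt = Bt.
    apply/ffunP => x; rewrite !ffunE /= invMg invgK !permM.
    have := congr1 (fun B : board => B (h2 x)) E; rewrite /act9 !ffunE /= permK => ->.
    by rewrite permK.
  case: (stab Hg Hact) => /(congr1 (fun z => (z * h2)%g)) Eh /(congr1 (fun z => (z * s2)%g)) Es.
  move: Eh Es; rewrite -!mulgA !mulVg !mulg1 !mul1g => -> ->. by [].
split; first by exists Bt; split; [exact: sudoku_Bt | exact: stab].
split; first exact: card_G9.
split; first by exists Bt; split; [exact: sudoku_Bt | rewrite /orbit9 card_in_imset // card_G9].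
by move=> B _; rewrite /orbit9 -card_G9; exact: leq_imset_card.
Qed.
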